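(* A finitely generated associative algebra $A$ is NC-complete if and only if it is Lie complete. Similarly, $A$ is NC-nilpotent if and only if it is Lie nilpotent.
   Context: $L_1=A$, $L_k=[A,L_{k-1}]$, $M_k=AL_kA$. The NC-filtration is $F_k=\sum_{m\ge1}\sum_{i_1+\cdots+i_m=k+m}M_{i_1}\cdots M_{i_m}$. $A$ is Lie complete (resp. NC-complete) if it is complete in the topology defined by the filtration $M_\bullet$ (resp. $F_\bullet$); $A$ is Lie nilpotent (resp. NC-nilpotent) if $M_N(A)=0$ (resp. $F_N(A)=0$) for some $N$. *)

(* Defs.v *)
From HB Require Import structures.
From mathcomp Require Import all_boot all_order all_algebra.
Set Implicit Arguments. Unset Strict Implicit. Unset Printing Implicit Defensive.
Import GRing.Theory.
Local Open Scope ring_scope.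

Section NCFiltration.
Variables (K : fieldType) (A : algType K).

Inductive span (S : A -> Prop) : A -> Prop :=
  | span_in x : S x -> span S x
  | span_0 : span S 0
  | span_add x y : span S x -> span S y -> span S (x + y)
  | span_scale (c : K) x : span S x -> span S (c *: x).

Definition setmul (P Q : A -> Prop) : A -> Prop :=
  span (fun x => exists p q, P p /\ Q q /\ x = p * q).

Definition commA (V : A -> Prop) : A -> Prop :=
  span (fun x => exists a v, V v /\ x = a * v - v * a).

(* L k : L_1 = A, L_{k+1} = [A, L_k]  (L 0 := A, an unused dummy) *)
Fixpoint Lser (k : nat) : A -> Prop :=
  match k with
  | 0 => fun _ => True
  | k'.+1 => if k' == 0%N then (fun _ => True) else commA (Lser k')
  end.

Definition Mser (k : nat) : A -> Prop :=
  span (fun x => exists a v b, Lser k v /\ x = a * v * b).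

Fixpoint Mprod (s : seq nat) : A -> Prop :=
  match s with
  | [::] => fun x => x = 1
  | i :: s' => setmul (Mser i) (Mprod s')
  end.

Definition Fser (k : nat) : A -> Prop :=
  span (fun x => exists s : seq nat,
          [/\ s != [::], all (fun i => 0 < i)%N s,
              sumn s = (k + size s)%N & Mprod s x]).

(* A is complete (Hausdorff and complete) for the filtration V:
   the canonical map A -> lim A / V_k is bijective. *)
Definition filt_complete (V : nat -> A -> Prop) : Prop :=
  (forall x, (forall k, V k x) -> x = 0) /\
  (forall x : nat -> A, (forall j k, (k <= j)%N -> V k (x j - x k)) ->
     exists a, forall k, V k (a - x k)).

Definition filt_nilpotent (V : nat -> A -> Prop) : Prop :=
  exists N, forall x, V N x -> x = 0.

Definition Lie_complete := filt_complete Mser.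
Definition NC_complete := filt_complete Fser.
Definition Lie_nilpotent := filt_nilpotent Mser.
Definition NC_nilpotent := filt_nilpotent Fser.

Definition fin_gen : Prop :=
  exists gens : seq A, forall x,
    span (fun y => exists w : seq A, all (fun a => a \in gens) w /\
                     y = \prod_(a <- w) a) x.

End NCFiltration.

(* Main.v *)
Require Import Defs.
From mathcomp Require Import all_boot all_order all_algebra.
From mathcomp Require Import zify.
Set Implicit Arguments. Unset Strict Implicit. Unset Printing Implicit Defensive.
Import GRing.Theory.
Local Open Scope ring_scope.

Section Main.
Variables (K : fieldType) (A : algType K).
Implicit Types (x y z a b v w t u : A) (P Q S : A -> Prop).
Local Notation MM k := (@Mser K A k).
Local Notation LL k := (@Lser K A k).

Definition subsp (P : A -> Prop) :=
  [/\ P 0, (forall x y, P x -> P y -> P (x + y)) & (forall (c : K) x, P x -> P (c *: x))].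

Lemma span_subsp S : subsp (Defs.span S).
Proof. split; [exact: span_0 | exact: span_add | exact: span_scale]. Qed.

Lemma span_min S P : subsp P -> (forall x, S x -> P x) -> forall x, Defs.span S x -> P x.
Proof. case=> P0 PD PZ HS x; elim=> //; auto. Qed.

Lemma span_lin S P (f : A -> A) : subsp P -> f 0 = 0 ->
  (forall x y, f (x + y) = f x + f y) -> (forall (c : K) x, f (c *: x) = c *: f x) ->
  (forall x, S x -> P (f x)) -> forall x, Defs.span S x -> P (f x).
Proof.
move=> [P0 PD PZ] f0 fD fZ HS x; elim=> //.
- by rewrite f0.
- by move=> u v _ Hu _ Hv; rewrite fD; auto.
- by move=> c u _ Hu; rewrite fZ; auto.
Qed.

Lemma subspN P x : subsp P -> P x -> P (- x).
Proof. by case=> _ _ PZ Px; rewrite -scaleN1r; apply: PZ. Qed.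

Lemma subspB P x y : subsp P -> P x -> P y -> P (x - y).
Proof. move=> sP Px Py; case: (sP) => _ PD _; apply: PD => //; exact: subspN. Qed.

Lemma subsp_sum P (I : finType) (F : I -> A) : subsp P -> (forall i, P (F i)) -> P (\sum_i F i).
Proof.
move=> [P0 PD PZ] HF; apply: (big_ind P) => //.
Qed.

Definition ideal P := [/\ subsp P, (forall a x, P x -> P (a * x)) & (forall a x, P x -> P (x * a))].

Definition cm x y := x * y - y * x.

Lemma LS01 k x : (k <= 1)%N -> Lser k x.
Proof. by case: k => [|[|]]. Qed.

Lemma LSS k : (1 <= k)%N -> (LL k.+1) = commA (Lser k).
Proof. by case: k. Qed.

Lemma LS_subsp k : subsp (LL k).
Proof.
case: k => [|k]; first by split.
case: k => [|k]; first by split.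
rewrite LSS //; exact: span_subsp.
Qed.

Lemma LS_cm k a v : (1 <= k)%N -> Lser k v -> Lser k.+1 (cm a v).
Proof. by move=> k1 Hv; rewrite LSS //; apply: span_in; exists a, v. Qed.

Lemma commA_mono V W : (forall x, V x -> W x) -> forall x, commA V x -> commA W x.
Proof.
move=> VW; apply: span_min; first exact: span_subsp.
by move=> x [a [v [Vv ->]]]; apply: span_in; exists a, v; split => //; apply: VW.
Qed.

Lemma LS_dec k x : Lser k.+1 x -> Lser k x.
Proof.
elim: k x => [|k IH] x; first by [].
case: k IH => [|k] IH; first by [].
rewrite LSS // LSS //; apply: commA_mono; exact: IH.
Qed.

Lemma MS_ideal k : ideal (MM k).
Proof.
split; first exact: span_subsp.
- move=> a; apply: (span_lin (f := fun x => a * x)); first exact: span_subsp.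
  + by rewrite mulr0.
  + by move=> x y; rewrite mulrDr.
  + by move=> c x; rewrite scalerAr.
  + by move=> x [a' [v [b [Lv ->]]]]; apply: span_in; exists (a * a'), v, b; rewrite !mulrA.
- move=> a; apply: (span_lin (f := fun x => x * a)); first exact: span_subsp.
  + by rewrite mul0r.
  + by move=> x y; rewrite mulrDl.
  + by move=> c x; rewrite scalerAl.
  + by move=> x [a' [v [b [Lv ->]]]]; apply: span_in; exists a', v, (b * a); rewrite !mulrA.
Qed.

Lemma LM k v : Lser k v -> Mser k v.
Proof. by move=> Lv; apply: span_in; exists 1, v, 1; rewrite mul1r mulr1. Qed.

Lemma MS_dec k x : Mser k.+1 x -> Mser k x.
Proof.
apply: span_min; first exact: span_subsp.
by move=> y [a [v [b [Lv ->]]]]; apply: span_in; exists a, v, b; split => //; apply: LS_dec.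
Qed.

Lemma MS_le j k x : (k <= j)%N -> Mser j x -> Mser k x.
Proof.
move=> /subnK <-; elim: (j - k)%N => [//|d IH] H; apply: IH; exact: MS_dec.
Qed.

Lemma MS01 k x : (k <= 1)%N -> Mser k x.
Proof. by move=> k1; apply: LM; apply: LS01. Qed.


Lemma cmNC x y : cm x y = - cm y x.
Proof. by rewrite /cm opprB. Qed.

Lemma cmxx x : cm x x = 0.
Proof. by rewrite /cm subrr. Qed.

Lemma cmDl x y z : cm (x + y) z = cm x z + cm y z.
Proof. by rewrite /cm mulrDl mulrDr opprD addrACA. Qed.

Lemma cmMl x y z : cm (x * y) z = x * cm y z + cm x z * y.
Proof. by rewrite /cm mulrBr mulrBl !mulrA addrA subrK. Qed.

Lemma cm0l x : cm 0 x = 0.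
Proof. by rewrite /cm mul0r mulr0 subrr. Qed.

Lemma cmZl (c : K) x y : cm (c *: x) y = c *: cm x y.
Proof. by rewrite /cm scalerBr scalerAl -scalerAr. Qed.

Lemma ideal_sub P : ideal P -> subsp P.
Proof. by case. Qed.

Lemma LS_cmN k a v : (1 <= k)%N -> Lser k v -> Lser k.+1 (cm v a).
Proof. by move=> k1 Hv; rewrite cmNC; apply: subspN; [exact: LS_subsp| exact: LS_cm]. Qed.

Lemma sq_lemma k y w1 w2 : (1 <= k)%N -> LL k w1 -> LL k w2 ->
  MM k.+2 (cm y w1 * cm y w2).
Proof.
move=> k1 L1 L2.
have k2 : (1 <= k.+1)%N by [].
set Q := cm y w1; set P := cm w2 w1; set X := cm (y * w2) w1.
have E : cm X y = y * cm P y + (Q * cm w2 y + cm Q y * w2).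
  by rewrite /X cmMl cmDl !cmMl cmxx mul0r addr0.
have E2 : Q * cm y w2 = - (cm X y - y * cm P y - cm Q y * w2).
  by rewrite E [cm y w2]cmNC mulrN; congr (- _); rewrite [y * cm P y + _]addrC !addrK.
rewrite E2; have [sM lM rM] := MS_ideal k.+2.
apply: subspN => //; apply: subspB => //; [apply: subspB => //|].
- by apply: LM; apply: LS_cmN => //; apply: LS_cm.
- by apply: lM; apply: LM; apply: LS_cmN => //; apply: LS_cm.
- by apply: rM; apply: LM; apply: LS_cmN => //; apply: LS_cm.
Qed.


Lemma id1 a C1 z b C2 : a * C1 * z * (b * C2) = a * (z * b) * (C1 * C2) - a * cm (z * b) C1 * C2.
Proof. by rewrite /cm mulrBr mulrBl !mulrA opprB addrC subrK. Qed.

Definition Tg k y := Defs.span (fun x => exists a w, LL k w /\ x = a * cm y w).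

Lemma T_lemma k y t t' z : (1 <= k)%N -> Tg k y t -> Tg k y t' -> MM k.+2 (t * z * t').
Proof.
move=> k1 Ht Ht'; have [sM lM rM] := MS_ideal k.+2.
move: t Ht; apply: (span_lin (f := fun t => t * z * t')) => //.
- by rewrite !mul0r.
- by move=> u v; rewrite !mulrDl.
- by move=> c u; rewrite -!scalerAl.
move=> x [a [w1 [L1 ->]]].
move: t' Ht'; apply: (span_lin (f := fun t' => a * cm y w1 * z * t')) => //.
- by rewrite mulr0.
- by move=> u v; rewrite mulrDr.
- by move=> c u; rewrite scalerAr.
move=> x' [b [w2 [L2 ->]]].
set C1 := cm y w1; set C2 := cm y w2.
rewrite id1.
apply: subspB => //.
- by apply: lM; apply: sq_lemma.
- by apply: rM; apply: lM; apply: LM; apply: LS_cm => //; apply: LS_cm.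
Qed.

Definition Gs k (gens : seq A) := Defs.span (fun x =>
  (exists y a w, y \in gens /\ LL k w /\ x = a * cm y w) \/ MM k.+2 x).

Lemma G_left k gens a x : Gs k gens x -> Gs k gens (a * x).
Proof.
move: x; apply: (span_lin (f := fun x => a * x)); first exact: span_subsp.
- by rewrite mulr0.
- by move=> u v; rewrite mulrDr.
- by move=> c u; rewrite scalerAr.
move=> x [[y [a' [w [yg [Lw ->]]]]]|Mx]; apply: span_in.
- by left; exists y, (a * a'), w; rewrite mulrA.
- by right; have [_ lM _] := MS_ideal k.+2; apply: lM.
Qed.

Lemma comm_swap x y : x * y = y * x - cm y x.
Proof. by rewrite /cm opprB addrC subrK. Qed.

Lemma words_G k gens w l : (1 <= k)%N -> LL k w -> all (fun a => a \in gens) l ->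
  Gs k gens (cm (\prod_(a <- l) a) w).
Proof.
move=> k1 Lw; elim: l => [|y l IH].
  by move=> _; rewrite big_nil /cm mul1r mulr1 subrr; apply: span_0.
rewrite /= => /andP [yg al]; rewrite big_cons cmMl.
apply: span_add; first by apply: G_left; apply: IH.
rewrite comm_swap; apply: subspB; first exact: span_subsp.
- by apply: span_in; left; exists y, (\prod_(a <- l) a), w.
- by apply: span_in; right; apply: LM; apply: LS_cm => //; apply: LS_cm.
Qed.

Definition gen_by (gens : seq A) := forall x,
    Defs.span (fun y => exists w : seq A, all (fun a => a \in gens) w /\
                     y = \prod_(a <- w) a) x.

Lemma reduce k gens x : (1 <= k)%N -> gen_by gens -> MM k.+1 x -> Gs k gens x.
Proof.
move=> k1 hg; apply: span_min; first exact: span_subsp.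
move=> _ [a [v [b [Lv ->]]]].
have -> : a * v * b = a * b * v - a * cm b v.
  by rewrite /cm mulrBr !mulrA opprB addrC subrK.
apply: subspB; first exact: span_subsp.
- rewrite -mulrA; apply: G_left.
  apply: G_left; move: v Lv; rewrite LSS // /commA; apply: (span_min (P := Gs k gens)); first exact: span_subsp.
  move=> _ [a' [w [Lw ->]]]; rewrite -/(cm a' w).
  move: (hg a'); move: a'; apply: (span_lin (P := Gs k gens) (f := fun a' => cm a' w)); first exact: span_subsp.
  + exact: cm0l.
  + by move=> u u'; rewrite cmDl.
  + by move=> c u; rewrite cmZl.
  move=> _ [l [al ->]]; exact: words_G.
- by apply: G_left; apply: span_in; right; apply: LM; apply: LS_cm.
Qed.

Lemma Grep k gens x : (1 <= k)%N -> Gs k gens x ->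
  exists t : 'I_(size gens) -> A, (forall i : 'I_(size gens), Tg k (nth 0 gens i) (t i)) /\
    exists e, MM k.+2 e /\ x = \sum_i t i + e.
Proof.
move=> k1; have [sM lM rM] := MS_ideal k.+2; case: (sM) => M0 MD MZ.
elim.
- move=> x0 [[y [a [w [yg [Lw ->]]]]]|Mx].
  + pose i0 : 'I_(size gens) := Ordinal (etrans (index_mem y gens) yg).
    exists (fun i => if i == i0 then a * cm y w else 0); split.
      move=> i; case: eqP => [->|_]; last exact: span_0.
      by apply: span_in; exists a, w; rewrite nth_index.
    exists 0; split => //; rewrite addr0 (bigD1 i0) //= eqxx big1 ?addr0 //.
    by move=> i /negbTE ->.
  + exists (fun _ => 0); split; first by move=> i; apply: span_0.
    by exists x0; split => //; rewrite big1 ?add0r.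
- exists (fun _ => 0); split; first by move=> i; apply: span_0.
  by exists 0; split => //; rewrite big1 ?add0r.
- move=> x1 x2 _ [t1 [T1 [e1 [E1 ->]]]] _ [t2 [T2 [e2 [E2 ->]]]].
  exists (fun i => t1 i + t2 i); split; first by move=> i; apply: span_add; [exact: T1|exact: T2].
  by exists (e1 + e2); split; [apply: MD | rewrite big_split addrACA].
- move=> c x1 _ [t1 [T1 [e1 [E1 ->]]]].
  exists (fun i => c *: t1 i); split; first by move=> i; apply: span_scale; exact: T1.
  by exists (c *: e1); split; [apply: MZ | rewrite scalerDr scaler_sumr].
Qed.

Lemma prod_split P m (F : 'I_m -> A) (i j : 'I_m) : ideal P -> (i < j)%N ->
  (forall z, P (F i * z * F j)) -> P (\prod_(l < m) F l).
Proof.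
move=> [sP lP rP] ij HF.
case: m F i j ij HF => [|m] F i j ij HF; first by case: i ij HF.
pose G := fun l : nat => F (inord l).
have -> : \prod_(l < m.+1) F l = \prod_(0 <= l < m.+1) G l.
  by rewrite big_mkord; apply: eq_bigr => l _; rewrite /G inord_val.
have Gi : G i = F i by rewrite /G inord_val.
have Gj : G j = F j by rewrite /G inord_val.
have hi := ltn_ord i; have hj := ltn_ord j.
rewrite (@big_cat_nat _ _ _ i) //=; last exact: ltnW.
rewrite (@big_ltn _ _ _ i) //=.
rewrite (@big_cat_nat _ _ _ j _ m.+1) //=; last exact: ltnW.
rewrite (@big_ltn _ _ _ j) //= Gi Gj.
set X := \prod_(0 <= l < i) G l; set Y := \prod_(i.+1 <= l < j) G l.
set Z := \prod_(j.+1 <= l < m.+1) G l.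
have -> : X * (F i * (Y * (F j * Z))) = X * (F i * Y * F j) * Z by rewrite !mulrA.
by apply: rP; apply: lP; apply: HF.
Qed.

Lemma pigeon m n (f : 'I_m -> 'I_n) : (n < m)%N -> exists i j : 'I_m, (i < j)%N /\ f i = f j.
Proof.
move=> nm; have : [exists i, exists j, (f i == f j) && (i != j)].
  case: (boolP [exists i, exists j, (f i == f j) && (i != j)]) => // /existsPn H; exfalso.
  have inj : injective f.
    move=> i j fij; apply/eqP; move/existsPn: (H i) => /(_ j).
    by rewrite fij eqxx /= => /negbNE.
  by have := leq_card f inj; rewrite !card_ord => /(leq_trans nm); rewrite ltnn.
case/existsP => i /existsP [j /andP [/eqP fij nij]].
case: (ltngtP i j) => [lt|gt|eq]; first by exists i, j.
  by exists j, i.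
by move: nij; rewrite (val_inj eq) eqxx.
Qed.

Lemma prod_mod P m (F G : 'I_m -> A) : ideal P -> (forall i, P (F i - G i)) ->
  P (\prod_i F i - \prod_i G i).
Proof.
move=> [sP lP rP]; elim: m F G => [|m IH] F G HF.
  by rewrite !big_ord0 subrr; case: sP.
rewrite !big_ord_recr /=.
set a := \prod_(i < m) _; set a' := \prod_(i < m) _.
have -> : a * F ord_max - a' * G ord_max = (a - a') * F ord_max + a' * (F ord_max - G ord_max).
  by rewrite mulrBl mulrBr addrA subrK.
case: sP => _ PD _; apply: PD; first by apply: rP; apply: IH.
by apply: lP.
Qed.


Lemma step k gens qs : (1 <= k)%N -> gen_by gens -> size qs = (size gens).+1 ->
  (forall q, q \in qs -> MM k.+1 q) -> MM k.+2 (\prod_(q <- qs) q).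
Proof.
move=> k1 hg sq Hq; have Mi := MS_ideal k.+2; have [sM lM rM] := Mi.
rewrite (big_nth 0) big_mkord.
have : forall i : 'I_(size qs), exists te : ('I_(size gens) -> A) * A,
   (forall j : 'I_(size gens), Tg k (nth 0 gens j) (te.1 j)) /\ MM k.+2 te.2 /\
   nth 0 qs i = \sum_j te.1 j + te.2.
  move=> i; have := Grep k1 (reduce k1 hg (Hq _ (mem_nth 0 (ltn_ord i)))).
  by case=> t [Ht [e [He E]]]; exists (t, e).
case/fin_all_exists => te Hte.
set P1 := \prod_(i < size qs) nth 0 qs i.
set P2 := \prod_(i < size qs) \sum_j (te i).1 j.
have -> : P1 = (P1 - P2) + P2 by rewrite subrK.
case: (sM) => _ MD _; apply: MD.
  apply: prod_mod => // i; have [_ [He ->]] := Hte i; by rewrite /= addrC addKr.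
rewrite /P2 bigA_distr_bigA /=; apply: subsp_sum => // f.
have [i [j [ij fij]]] := pigeon f (eq_ind_r (fun m => (size gens < m)%N) (ltnSn _) sq).
apply: (prod_split (F := fun i => (te i).1 (f i))) ij _ => // z.
apply: T_lemma k1 _ _; first exact: (Hte i).1 (f i).
rewrite fij; exact: (Hte j).1 (f j).
Qed.

Lemma prod_mem p l q : q \in l -> MM p q -> MM p (\prod_(a <- l) a).
Proof.
have [sM lM rM] := MS_ideal p.
elim: l => [//|a l IH]; rewrite inE big_cons => /orP [/eqP <- Mq|ql Mq].
  by apply: rM.
by apply: lM; apply: IH.
Qed.

Lemma blocks (Q : A -> Prop) B r l : (r.+1 * B <= size l)%N ->
  (forall l', (B <= size l')%N -> (forall q, q \in l' -> q \in l) -> Q (\prod_(a <- l') a)) ->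
  exists qs, size qs = r.+1 /\ (forall q, q \in qs -> Q q) /\
    \prod_(a <- l) a = \prod_(a <- qs) a.
Proof.
elim: r l => [|r IH] l hs HQ.
  exists [:: \prod_(a <- l) a]; split => //; split; last by rewrite big_seq1.
  by move=> q; rewrite inE => /eqP ->; apply: HQ => //; rewrite mul1n in hs.
have hB : (B <= size l)%N.
  by apply: leq_trans hs; rewrite mulSn leq_addr.
have hs2 : (r.+1 * B <= size (drop B l))%N.
  by rewrite size_drop leq_subRL // -mulSn.
have [qs [sq [Hq E]]] := IH (drop B l) hs2 (fun l' h1 h2 => HQ l' h1 (fun q hq => mem_drop (h2 q hq))).
exists (\prod_(a <- take B l) a :: qs); split; first by rewrite /= sq.
split.
  move=> q; rewrite inE => /orP [/eqP ->|]; last exact: Hq.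
  by apply: HQ; [rewrite size_takel | move=> q'; apply: mem_take].
by rewrite -{1}(cat_take_drop B l) big_cat /= E big_cons.
Qed.

Lemma pow_M2 gens j l : gen_by gens -> (forall q, q \in l -> MM 2 q) ->
  ((size gens).+1 ^ j <= size l)%N -> MM j.+2 (\prod_(q <- l) q).
Proof.
move=> hg; elim: j l => [|j IH] l Hl hs.
  by case: l Hl hs => [//|a l] Hl _; apply: (prod_mem (q := a)); [rewrite inE eqxx|apply: Hl; rewrite inE eqxx].
rewrite expnS in hs.
have [qs [sq [Hq ->]]] := blocks (Q := MM j.+2) hs
  (fun l' h1 h2 => IH l' (fun q hq => Hl q (h2 q hq)) h1).
by apply: step.
Qed.

Fixpoint allM (s : seq nat) (l : seq A) : Prop :=
  match s, l with
  | [::], [::] => True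
  | i :: s', a :: l' => MM i a /\ allM s' l'
  | _, _ => False
  end.

Lemma Mprod_ind s (P : A -> Prop) x : subsp P ->
  (forall l, allM s l -> P (\prod_(a <- l) a)) -> Mprod s x -> P x.
Proof.
elim: s P x => [|i s IH] P x sP HP /=.
  by move=> ->; have := HP [::] I; rewrite big_nil.
apply: span_min => // _ [p [q [Mp [Mq ->]]]].
case: sP => P0 PD PZ.
apply: (IH (fun q => P (p * q))) => //.
  split; first by rewrite mulr0.
  - by move=> u v Pu Pv; rewrite mulrDr; apply: PD.
  - by move=> c u Pu; rewrite -scalerAr; apply: PZ.
by move=> l Hl; have := HP (p :: l); rewrite big_cons; apply; split.
Qed.

Lemma allM_has k s l : allM s l -> has (fun i => k <= i)%N s -> MM k (\prod_(a <- l) a).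
Proof.
have [sM lM rM] := MS_ideal k.
elim: s l => [|i s IH] [|a l] //= [Ma Hl] /orP [ki|hs]; rewrite big_cons.
  by apply: rM; apply: MS_le ki Ma.
by apply: lM; apply: IH.
Qed.

Lemma count_bound k s : all (fun i => 0 < i)%N s -> ~~ has (fun i => k <= i)%N s ->
  (sumn s <= size s + k.-1 * count (fun i => 2 <= i)%N s)%N.
Proof.
elim: s => [//|i s IH] /= /andP [i0 al]; rewrite negb_or => /andP [ki hs].
have := IH al hs; rewrite -ltnNge in ki.
case: (leqP 2 i) => i2 /=; nia.
Qed.

Lemma merge s l : allM s l -> (1 <= count (fun i => 2 <= i)%N s)%N ->
  exists l', (forall q, q \in l' -> MM 2 q) /\ size l' = count (fun i => 2 <= i)%N s /\
    \prod_(a <- l) a = \prod_(a <- l') a.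
Proof.
have [sM lM rM] := MS_ideal 2.
elim: s l => [|i s IH] [|a l] //= [Ma Hl].
case: (leqP 2 i) => i2 /=.
  have Ma2 : MM 2 a by apply: MS_le i2 Ma.
  case: (posnP (count (fun i => 2 <= i)%N s)) => c0 _.
    exists [:: a * \prod_(b <- l) b]; rewrite c0; split => //.
      by move=> q; rewrite inE => /eqP ->; apply: rM.
    by rewrite big_cons big_seq1.
  have [l' [H1 [H2 H3]]] := IH l Hl c0.
  exists (a :: l'); split; first by move=> q; rewrite inE => /orP [/eqP ->|]; [|apply: H1].
  by rewrite /= H2 !big_cons H3.
rewrite add0n => c1; have [l' [H1 [H2 H3]]] := IH l Hl c1.
case: l' H1 H2 H3 => [|p l3] H1 H2 H3; first by move: c1; rewrite -H2.
exists (a * p :: l3); split.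
  move=> q; rewrite inE => /orP [/eqP ->|q3]; first by apply: lM; apply: H1; rewrite inE eqxx.
  by apply: H1; rewrite inE q3 orbT.
by rewrite -H2 !big_cons H3 big_cons mulrA.
Qed.


Lemma FM gens k N x : gen_by gens -> (k * (size gens).+1 ^ k <= N)%N -> Fser N x -> MM k x.
Proof.
move=> hg hN Fx; case: k hN => [|[|j]] hN; try by apply: MS01.
have [sM lM rM] := MS_ideal j.+2.
move: x Fx; apply: span_min => // y [s [s0 pos sz Ms]].
apply: (Mprod_ind (P := MM j.+2)) Ms => // l Hl.
case: (boolP (has (fun i => j.+2 <= i)%N s)) => hk; first exact: allM_has Hl hk.
have cb := count_bound pos hk; move: cb; rewrite /=.
set c := count _ s => cb.
set e := ((size gens).+1 ^ j)%N; set e2 := ((size gens).+1 ^ j.+2)%N.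
have ee2 : (e <= e2)%N by rewrite /e /e2 leq_pexp2l //; lia.
have e1 : (0 < e)%N by rewrite expn_gt0.
have h : (j.+1 * e <= j.+1 * c)%N.
  have : (j.+1 * e <= j.+2 * e2)%N by apply: leq_mul.
  move: hN; rewrite -/e2; lia.
rewrite leq_pmul2l // in h.
have c1 : (1 <= c)%N by apply: leq_trans h.
have [l' [H1 [H2 H3]]] := merge Hl c1.
by rewrite H3; apply: pow_M2 hg H1 _; rewrite H2.
Qed.

Lemma MF k x : MM k.+1 x -> Fser k x.
Proof.
move=> Mx; apply: span_in; exists [:: k.+1]; split => //.
  by rewrite /= addn0 addn1.
by apply: span_in; exists x, 1; rewrite mulr1.
Qed.

End Main.

Theorem claim2p4 (K : fieldType) (A : algType K) :
  fin_gen A ->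
  (NC_complete A <-> Lie_complete A) /\ (NC_nilpotent A <-> Lie_nilpotent A).
Proof.
move=> [gens hg].
pose Nk k := (k * (size gens).+1 ^ k)%N.
have FMk : forall k x, Fser (Nk k) x -> @Mser K A k x.
  by move=> k x; apply: (FM (gens := gens)).
have Nmono : forall k j, (k <= j)%N -> (Nk k <= Nk j)%N.
  by move=> k j kj; apply: leq_mul => //; rewrite leq_pexp2l.
have Nge : forall k, (k <= Nk k)%N by move=> k; rewrite leq_pmulr // expn_gt0.
have sF : forall k, subsp (@Fser K A k) by move=> k; apply: span_subsp.
have sM : forall k, subsp (@Mser K A k) by move=> k; apply: span_subsp.
split; split.
- case=> HF CF; split.
    by move=> x Hx; apply: HF => k; apply: MF; apply: Hx.
  move=> x Cx.
  have Cy : forall j k, (k <= j)%N -> Fser k (x j.+1 - x k.+1).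
    by move=> j k kj; apply: MF; apply: Cx.
  have [a Ha] := CF (fun j => x j.+1) Cy.
  exists a => k.
  have -> : a - x k = (a - x (Nk k).+1) + (x (Nk k).+1 - x k) by rewrite addrA subrK.
  case: (sM k) => _ MD _; apply: MD; first exact: FMk (Ha (Nk k)).
  by apply: Cx; apply: leqW.
- case=> HM CM; split.
    by move=> x Hx; apply: HM => k; apply: FMk; apply: Hx.
  move=> x Cx.
  have Cy : forall j k, (k <= j)%N -> Mser k (x (Nk j) - x (Nk k)).
    by move=> j k kj; apply: FMk; apply: Cx; apply: Nmono.
  have [a Ha] := CM (fun j => x (Nk j)) Cy.
  exists a => k.
  have -> : a - x k = (a - x (Nk k.+1)) + (x (Nk k.+1) - x k) by rewrite addrA subrK.
  case: (sF k) => _ FD _; apply: FD; first exact: MF (Ha k.+1).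
  by apply: Cx; apply: leq_trans (Nge k.+1).
- case=> N HN; exists N.+1 => x Hx; apply: HN; exact: MF.
- case=> N HN; exists (Nk N) => x Hx; apply: HN; exact: FMk.
Qed.
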